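(* For every input permutation, algorithm $\mathcal{D}^2\mathcal{I}$ executes its instruction 6 only at steps where $D_1$ (and $D_2$) is empty.
   Context: The $\mathfrak{D}^2\mathfrak{I}$ machine consists of two decreasing stacks $D_1,D_2$ followed in series by an increasing stack $I$. Elements of $D_1,D_2$ must be in decreasing order from top to bottom (top largest); elements of $I$ in increasing order from top to bottom (top smallest). Operations: $d_0$ pushes the next input element (called $Input$) into $D_1$; $d_1$ moves $Top(D_1)$ to $D_2$; $d_2$ moves $Top(D_2)$ to $I$; $d_3$ pops $Top(I)$ and appends it to the output. Any comparison involving an empty stack is considered true. Conditions: ($\alpha$) $Top(D_2)<Top(I)$; ($\beta$) $Top(D_2)<Top(D_1)$ and $Top(D_1)<Top(I)$; ($\gamma$) $Top(D_1)<Input$, $Input<Top(I)$, and the sequence of input elements from $Input$ up to the first input element larger than $Top(D_2)$ is increasing. Algorithm $\mathcal{D}^2\mathcal{I}$ repeatedly executes the first applicable instruction among: 1. if $Top(I)$ is the next element to be output, perform $d_3$; 2. if the elements contained in $D_1\cup D_2$ are exactly the next elements to be output, move them to the output in increasing order; 3. perform $d_1$ if it is legal and ($\beta$) holds; 4. perform $d_0$ if it is legal and ($\gamma$) holds; 5. perform $d_2$ if it is legal and ($\alpha$) holds; 6. otherwise perform $d_3$. *)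

(* Defs.v *)
From mathcomp Require Import all_boot.
Set Implicit Arguments. Unset Strict Implicit. Unset Printing Implicit Defensive.

(* Stacks are lists, head = top. *)
Record state := State {
  inp : seq nat;   (* remaining input, head = Input *)
  d1  : seq nat;   (* decreasing stack D1 (top largest) *)
  d2  : seq nat;   (* decreasing stack D2 (top largest) *)
  ist : seq nat;   (* increasing stack I (top smallest) *)
  out : seq nat
}.

Definition top (s : seq nat) : option nat :=
  if s is x :: _ then Some x else None.

(* strict comparison; any comparison involving an empty stack is true *)
Definition olt (a b : option nat) : bool :=
  match a, b with Some x, Some y => x < y | _, _ => true end.

(* The input is a permutation of 1..n, so the next element to be output
   is (number of elements already output) + 1. *)
Definition next_out (st : state) : nat := (size (out st)).+1.

Definition d0_legal st := (inp st != [::]) && olt (top (d1 st)) (top (inp st)).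
Definition d1_legal st := (d1 st != [::]) && olt (top (d2 st)) (top (d1 st)).
Definition d2_legal st := (d2 st != [::]) && olt (top (d2 st)) (top (ist st)).

Definition cond_alpha st := olt (top (d2 st)) (top (ist st)).
Definition cond_beta st :=
  olt (top (d2 st)) (top (d1 st)) && olt (top (d1 st)) (top (ist st)).
(* the segment of the input from Input up to (and including) the first input
   element larger than Top(D2); the whole remaining input if there is none *)
Definition gamma_segment st : seq nat :=
  take (find (fun x => olt (top (d2 st)) (Some x)) (inp st)).+1 (inp st).
Definition cond_gamma st :=
  [&& olt (top (d1 st)) (top (inp st)), olt (top (inp st)) (top (ist st))
    & sorted ltn (gamma_segment st)].

Definition instr1 st := top (ist st) == Some (next_out st).
Definition instr2 st :=
  (d1 st ++ d2 st != [::]) &&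
  perm_eq (d1 st ++ d2 st) (iota (next_out st) (size (d1 st ++ d2 st))).

Definition choice (st : state) : nat :=
  if instr1 st then 1
  else if instr2 st then 2
  else if d1_legal st && cond_beta st then 3
  else if d0_legal st && cond_gamma st then 4
  else if d2_legal st && cond_alpha st then 5
  else 6.

Definition op_d0 st := match inp st with
  | x :: r => State r (x :: d1 st) (d2 st) (ist st) (out st) | [::] => st end.
Definition op_d1 st := match d1 st with
  | x :: r => State (inp st) r (x :: d2 st) (ist st) (out st) | [::] => st end.
Definition op_d2 st := match d2 st with
  | x :: r => State (inp st) (d1 st) r (x :: ist st) (out st) | [::] => st end.
Definition op_d3 st := match ist st with
  | x :: r => State (inp st) (d1 st) (d2 st) r (rcons (out st) x) | [::] => st end.
Definition op_flush st :=
  State (inp st) [::] [::] (ist st) (out st ++ sort leq (d1 st ++ d2 st)).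

(* one step of algorithm D2I (an impossible d3 on empty I leaves the state) *)
Definition step (st : state) : state :=
  match choice st with
  | 1 => op_d3 st
  | 2 => op_flush st
  | 3 => op_d1 st
  | 4 => op_d0 st
  | 5 => op_d2 st
  | _ => op_d3 st
  end.

Definition init (s : seq nat) : state := State s [::] [::] [::] [::].

Definition terminated (st : state) : bool :=
  [&& inp st == [::], d1 st == [::], d2 st == [::] & ist st == [::]].

(* Main.v *)
Require Import Defs.
From mathcomp Require Import all_boot.

Definition gtr (a b : nat) := b < a.

Lemma gtr_trans : transitive gtr.
Proof. move=> y x z; rewrite /gtr => h1 h2; exact: ltn_trans h2 h1. Qed.

Definition Inv (st : state) : bool :=
  [&& uniq (inp st ++ d1 st ++ d2 st),
      sorted gtr (d1 st), sorted gtr (d2 st), sorted ltn (ist st) &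
      all (fun x => all (fun y => x < y) (ist st)) (d1 st ++ d2 st)].

Ltac chc st := rewrite /choice; case: (instr1 st) => //; case: (instr2 st) => //;
  case: (d1_legal st) => //=; case: (cond_beta st) => //=;
  case: (d0_legal st) => //=; case: (cond_gamma st) => //=;
  case: (d2_legal st) => //=; case: (cond_alpha st) => //=.

Lemma choice3 st : choice st = 3 -> d1_legal st.
Proof. chc st. Qed.
Lemma choice4 st : choice st = 4 -> d0_legal st && cond_gamma st.
Proof. chc st. Qed.
Lemma choice5 st : choice st = 5 ->
  ~~ (d1_legal st && cond_beta st) && (d2_legal st && cond_alpha st).
Proof. chc st. Qed.
Lemma choice6 st : choice st = 6 ->
  ~~ (d1_legal st && cond_beta st) && ~~ (d2_legal st && cond_alpha st).
Proof. chc st. Qed.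

Lemma Inv_d3 st : Inv st -> Inv (op_d3 st).
Proof.
case: st => i a b c o; rewrite /Inv /op_d3 /=; case: c => [|y c] //=.
case/and5P => U Sa Sb Sc All; apply/and5P; split => //.
  exact: (path_sorted Sc).
apply/allP => x /(allP All) /=; by case/andP.
Qed.

Lemma Inv_flush st : Inv st -> Inv (op_flush st).
Proof.
case: st => i a b c o; rewrite /Inv /op_flush.
case/and5P => U Sa Sb Sc All; apply/and5P; split => //=.
by move: U => /=; rewrite cats0 cat_uniq => /andP[].
Qed.

Lemma Inv_d1 st : Inv st -> d1_legal st -> Inv (op_d1 st).
Proof.
case: st => i a b c o; rewrite /Inv /op_d1 /d1_legal; case: a => [|x a] //=.
case/and5P => U Sa Sb Sc All L; apply/and5P; split.
- rewrite (perm_uniq (_ : perm_eq _ (i ++ x :: a ++ b))) // perm_cat2l perm_sym.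
  by rewrite -[x :: _]cat1s perm_catCA.
- exact: (path_sorted Sa).
- by case: b Sb L {U All} => //= y b -> L; rewrite /gtr L.
- exact: Sc.
- by move: All; rewrite !all_cat /= => /andP[-> /andP[-> ->]].
Qed.

Lemma all_lt_sorted x y c : x < y -> sorted ltn (y :: c) -> all (fun z => x < z) (y :: c).
Proof.
move=> xy S; apply: (order_path_min ltn_trans); by rewrite /= xy.
Qed.

Lemma Inv_d0 st : Inv st -> d0_legal st && cond_gamma st -> Inv (op_d0 st).
Proof.
case: st => i a b c o; rewrite /Inv /op_d0 /d0_legal /cond_gamma; case: i => [|x i] //=.
case/and5P => U Sa Sb Sc All /and4P[L1 _ L3 _].
rewrite Sb Sc All /= andbT.
apply/and3P; split.
- rewrite (perm_uniq (_ : perm_eq _ (x :: i ++ a ++ b))) //.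
  by rewrite perm_sym -[x :: i ++ _]cat1s perm_catCA.
- by case: a Sa L1 {U All} => //= y a -> L; rewrite /gtr L.
- case: c Sc L3 {All} => //= y c Sc L.
  by have /= := all_lt_sorted _ _ _ L Sc.
Qed.


Lemma Inv_d2 st : Inv st ->
  ~~ (d1_legal st && cond_beta st) && (d2_legal st && cond_alpha st) ->
  Inv (op_d2 st).
Proof.
case: st => i a b c o; rewrite /Inv /op_d2 /d1_legal /cond_beta /d2_legal /cond_alpha.
case: b => [|x b] /=; first by rewrite andbF.
case/and5P => U Sa Sb Sc All /andP[NB /andP[_ L]].
have U2 : (x \notin i ++ a ++ b) && uniq (i ++ a ++ b).
  have := perm_uniq (permEl (perm_catCA (i ++ a) [:: x] b)).
  by rewrite /= -!catA U => <-.
case/andP: U2 => Nx U2.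
have Ab : all (gtr x) b := order_path_min gtr_trans Sb.
have Aa : all (gtr x) a.
  case: a Sa NB All Nx {U U2} => [|w a] //= Sa NB All Nx.
  have Wc : (if top c is Some y then w < y else true).
    by move: All; case: (c) => [|y c'] //= /andP[/andP[] ].
  have xw : w <= x by move: NB; case: (top c) Wc => [y ->|_]; rewrite /= ?andbT andbb -leqNgt.
  have wx : w != x.
    apply/negP => /eqP E; move: Nx; by rewrite -E mem_cat in_cons eqxx orbT.
  have wlt : w < x by rewrite ltn_neqAle wx xw.
  rewrite /gtr wlt /=; apply/allP => z /(allP (order_path_min gtr_trans Sa)).
  rewrite /gtr => zw; exact: ltn_trans zw wlt.
rewrite U2 (path_sorted Sb) Sa /=; apply/andP; split.
  by move: L Sc; case: (c) => //= y c' -> .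
move: All; rewrite !all_cat /= => /andP[A1 /andP[_ A3]].
apply/andP; split; apply/allP => z Hz; rewrite ?(allP A1 z Hz) ?(allP A3 z Hz) andbT.
  exact: (allP Aa z Hz).
exact: (allP Ab z Hz).
Qed.

Lemma Inv_step st : Inv st -> Inv (step st).
Proof.
move=> H; rewrite /step; case E: (choice st) => [|[|[|[|[|[|k]]]]]];
  try exact: Inv_d3.
- exact: Inv_flush.
- exact: Inv_d1 _ H (choice3 _ E).
- exact: Inv_d0 _ H (choice4 _ E).
- exact: Inv_d2 _ H (choice5 _ E).
Qed.

Lemma Inv_iter s k : uniq s -> Inv (iter k step (init s)).
Proof.
move=> Us; elim: k => [|k IH] /=; last exact: Inv_step.
by rewrite /Inv /= cats0 Us.
Qed.

Theorem mainTheorem8 (n : nat) (s : seq nat) (k : nat) :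
  perm_eq s (iota 1 n) ->
  let st := iter k step (init s) in
  ~~ terminated st -> choice st = 6 ->
  d1 st = [::] /\ d2 st = [::].
Proof.
move=> P st _ /choice6.
have : Inv st by apply: Inv_iter; rewrite (perm_uniq P) iota_uniq.
case: st => i a b c o; rewrite /Inv /d1_legal /cond_beta /d2_legal /cond_alpha /=.
case/and5P => _ _ _ _ All.
case: b All => [|y b] All.
  case: a All => [|w a] //= All.
  by case: c All => [|z c] //= /andP[/andP[-> _] _].
by case: c All => [|z c]; rewrite /= ?all_cat /= ?andbF //= => /andP[_ /andP[/andP[-> _] _]]; rewrite andbF.
Qed.
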